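(* Let $(R,\mathfrak m)$ be a one-dimensional Cohen–Macaulay local ring. Let $I$ be a regular trace ideal of $R$ and $J$ a regular ideal of $R$ with $J\subseteq I$, and suppose there exists $q\in I$ with $IJ=qJ$. Then $$\{X\in\mathcal T(I:I)\mid X\subseteq J:I\}=\{q^{-1}Y\mid Y\in\mathcal T(R),\ Y\subseteq J\}.$$
   Context: $Q(R)$ is the total ring of fractions; for $R$-submodules $X,Y$ of $Q(R)$, $X:Y=\{x\in Q(R)\mid xY\subseteq X\}$; $I:I$ is a subring of $Q(R)$. An ideal is regular if it contains a non-zerodivisor. For a ring $A$, the trace ideal of an $A$-module $M$ is $\mathrm{tr}_A(M)=\sum_{f\in\mathrm{Hom}_A(M,A)}\mathrm{Im}f$, an ideal is a trace ideal if it equals some $\mathrm{tr}_A(M)$, and $\mathcal T(A)$ is the set of regular trace ideals of $A$. *)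

(* Defs.v *)
From HB Require Import structures.
From mathcomp Require Import all_boot all_order all_algebra.
Set Implicit Arguments. Unset Strict Implicit. Unset Printing Implicit Defensive.
Import GRing.Theory.
Local Open Scope ring_scope.

Definition set_eq (T : Type) (X Y : T -> Prop) := forall x, X x <-> Y x.
Definition included (T : Type) (X Y : T -> Prop) := forall x, X x -> Y x.

Section Ring.
Variable R : comNzRingType.

Definition is_ideal (I : R -> Prop) : Prop :=
  I 0 /\ (forall x y, I x -> I y -> I (x + y)) /\ (forall r x, I x -> I (r * x)).

Definition nonzerodivisor (x : R) : Prop := forall y, x * y = 0 -> y = 0.

Definition regular_ideal (I : R -> Prop) : Prop :=
  is_ideal I /\ exists x, I x /\ nonzerodivisor x.

Definition prime_ideal (P : R -> Prop) : Prop :=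
  is_ideal P /\ ~ P 1 /\ (forall a b, P (a * b) -> P a \/ P b).

Definition strict_subset (X Y : R -> Prop) : Prop :=
  included X Y /\ exists y, Y y /\ ~ X y.

Definition prime_chain (n : nat) (P : nat -> R -> Prop) : Prop :=
  (forall i, (i <= n)%N -> prime_ideal (P i)) /\
  (forall i, (i < n)%N -> strict_subset (P i) (P i.+1)).

Definition krull_dim (n : nat) : Prop :=
  (exists P, prime_chain n P) /\ ~ (exists P, prime_chain n.+1 P).

Definition gen_by (s : seq R) (x : R) : Prop :=
  exists c : 'I_(size s) -> R, x = \sum_(i < size s) c i * s`_i.

Definition noetherian : Prop :=
  forall I, is_ideal I -> exists s : seq R, set_eq I (gen_by s).

Definition regular_seq (m : R -> Prop) (s : seq R) : Prop :=
  (forall i, (i < size s)%N -> m s`_i) /\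
  (forall i, (i < size s)%N -> forall y,
      gen_by (take i s) (s`_i * y) -> gen_by (take i s) y) /\
  ~ gen_by s 1.

Definition ideal_mul (I J : R -> Prop) (x : R) : Prop :=
  exists n (a b : 'I_n -> R), (forall i, I (a i) /\ J (b i)) /\
    x = \sum_(i < n) a i * b i.

Definition scale_set (q : R) (J : R -> Prop) (x : R) : Prop :=
  exists j, J j /\ x = q * j.

Definition hom_to_ring (M : lmodType R) (h : M -> R) : Prop :=
  forall (c : R) (u v : M), h (c *: u + v) = c * h u + h v.

Definition trace_of (M : lmodType R) (a : R) : Prop :=
  exists n (fs : 'I_n -> M -> R) (ms : 'I_n -> M),
    (forall i, hom_to_ring (fs i)) /\ a = \sum_(i < n) fs i (ms i).

Definition is_trace_ideal (X : R -> Prop) : Prop :=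
  exists M : lmodType R, set_eq X (trace_of M).

Definition regular_trace_ideal (X : R -> Prop) : Prop :=
  regular_ideal X /\ is_trace_ideal X.

End Ring.

Section Local.
Variable R : comUnitRingType.

Definition local_ring (m : R -> Prop) : Prop :=
  is_ideal m /\ ~ m 1 /\ (forall x, ~ m x -> x \is a GRing.unit).

(* Cohen-Macaulay local ring of dimension d : depth = dim = d, i.e. there is
   an R-regular sequence of length d in m *)
Definition cohen_macaulay_local (m : R -> Prop) (d : nat) : Prop :=
  noetherian R /\ local_ring m /\ krull_dim R d /\
  exists s, size s = d /\ regular_seq m s.
End Local.

Definition total_ring_of_fractions (R Q : comUnitRingType)
  (f : {rmorphism R -> Q}) : Prop :=
  injective f /\
  (forall s, nonzerodivisor s -> f s \is a GRing.unit) /\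
  (forall x : Q, exists a s, nonzerodivisor s /\ x * f s = f a).

Definition img (T U : Type) (f : T -> U) (X : T -> Prop) (z : U) : Prop :=
  exists x, X x /\ z = f x.

Definition colon (Q : comNzRingType) (X Y : Q -> Prop) (x : Q) : Prop :=
  forall y, Y y -> X (x * y).

(* Main.v *)
Require Import Defs.
From HB Require Import structures.
From mathcomp Require Import all_boot all_order all_algebra.
From mathcomp Require boolp.
From mathcomp Require Import ring.
Set Implicit Arguments. Unset Strict Implicit. Unset Printing Implicit Defensive.
Import GRing.Theory.
Local Open Scope ring_scope.

Definition subX (S : comNzRingType) (X : S -> Prop) (HX : is_ideal X) := {x : S | X x}.

HB.instance Definition _ (S : comNzRingType) (X : S -> Prop) (HX : is_ideal X) := boolp.gen_eqMixin (@subX S X HX).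
HB.instance Definition _ (S : comNzRingType) (X : S -> Prop) (HX : is_ideal X) := boolp.gen_choiceMixin (@subX S X HX).

Section Sub.
Variables (S : comNzRingType) (X : S -> Prop) (HX : is_ideal X).
Let T := subX HX.
Lemma subX_eq (a b : T) : proj1_sig a = proj1_sig b -> a = b.
Proof. case: a b => [a Ha] [b Hb] /= e; subst b; congr exist; exact: boolp.Prop_irrelevance. Qed.
Definition sx0 : T := exist _ 0 HX.1.
Definition sxadd (a b : T) : T := exist _ (proj1_sig a + proj1_sig b)
   (HX.2.1 _ _ (proj2_sig a) (proj2_sig b)).
Lemma oppX x : X x -> X (- x).
Proof. move=> h; rewrite -mulN1r; exact: HX.2.2. Qed.
Definition sxopp (a : T) : T := exist _ (- proj1_sig a) (oppX (proj2_sig a)).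
Definition sxscale (r : S) (a : T) : T := exist _ (r * proj1_sig a) (HX.2.2 r _ (proj2_sig a)).
Lemma sx_addA : associative sxadd.
Proof. by move=> a b c; apply: subX_eq; rewrite /= addrA. Qed.
Lemma sx_addC : commutative sxadd.
Proof. by move=> a b; apply: subX_eq; rewrite /= addrC. Qed.
Lemma sx_add0 : left_id sx0 sxadd.
Proof. by move=> a; apply: subX_eq; rewrite /= add0r. Qed.
Lemma sx_addN : left_inverse sx0 sxopp sxadd.
Proof. by move=> a; apply: subX_eq; rewrite /= addNr. Qed.
End Sub.

HB.instance Definition _ (S : comNzRingType) (X : S -> Prop) (HX : is_ideal X) := GRing.isZmodule.Build (@subX S X HX)
  (@sx_addA S X HX) (@sx_addC S X HX) (@sx_add0 S X HX) (@sx_addN S X HX).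

Section Sub2.
Variables (S : comNzRingType) (X : S -> Prop) (HX : is_ideal X).
Let T := subX HX.
Lemma sx_scaleA a b (v : T) : @sxscale S X HX a (@sxscale S X HX b v) = @sxscale S X HX (a * b) v.
Proof. by apply: subX_eq; rewrite /= mulrA. Qed.
Lemma sx_scale1 : left_id 1 (@sxscale S X HX).
Proof. by move=> a; apply: subX_eq; rewrite /= mul1r. Qed.
Lemma sx_scaleDr : right_distributive (@sxscale S X HX) +%R.
Proof. by move=> a u v; apply: subX_eq; rewrite /= mulrDr. Qed.
Lemma sx_scaleDl (v : T) : {morph (@sxscale S X HX)^~ v: a b / a + b}.
Proof. by move=> a b; apply: subX_eq; rewrite /= mulrDl. Qed.
End Sub2.

Section Inst.
Variables (S : comNzRingType) (X : S -> Prop) (HX : is_ideal X).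
HB.instance Definition _ := GRing.Zmodule_isLmodule.Build S (@subX S X HX)
  (@sx_scaleA S X HX) (@sx_scale1 S X HX) (@sx_scaleDr S X HX) (@sx_scaleDl S X HX).
End Inst.


Section Gen.
Variables (S : comNzRingType) (Q : comUnitRingType) (h : {rmorphism S -> Q}).
Hypothesis hinj : injective h.

Definition Pprop (X : S -> Prop) := forall c : Q,
  (forall x, X x -> exists s, h s = c * h x) ->
  forall x, X x -> exists x', X x' /\ h x' = c * h x.

Lemma trace_elem (M : lmodType S) (fs : M -> S) m :
  hom_to_ring fs -> trace_of M (fs m).
Proof.
move=> Hf; exists 1%N, (fun _ => fs), (fun _ => m); split => //.
by rewrite big_ord1.
Qed.

Lemma trace_P X : is_trace_ideal X -> Pprop X.
Proof.
move=> [M HM] c Hc x /HM [n [fs [ms [Hf ->]]]].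
have Xf : forall i m, X (fs i m) by move=> i m; apply/HM/trace_elem.
pose psi i m := proj1_sig (boolp.cid (Hc _ (Xf i m))).
have Hpsi : forall i m, h (psi i m) = c * h (fs i m).
  by move=> i m; rewrite /psi; case: (boolp.cid _).
exists (\sum_(i < n) psi i (ms i)); split.
  apply/HM; exists n, psi, ms; split => // i a u v.
  apply: hinj; rewrite !rmorphD rmorphM !Hpsi Hf rmorphD rmorphM.
  by rewrite mulrDr mulrCA.
rewrite !rmorph_sum mulr_sumr; apply: eq_bigr => i _; exact: Hpsi.
Qed.

Lemma hom0 (M : lmodType S) (fs : M -> S) : hom_to_ring fs -> fs 0 = 0.
Proof.
move=> Hf; have := Hf 1 0 0; rewrite scaler0 add0r mul1r => E.
rewrite -{1}[fs 0]addr0 in E; exact: (esym (addrI _ E)).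
Qed.

Lemma homZ (M : lmodType S) (fs : M -> S) a u : hom_to_ring fs -> fs (a *: u) = a * fs u.
Proof. by move=> Hf; rewrite -[a *: u]addr0 Hf (hom0 Hf) addr0. Qed.

Lemma P_trace X x0 : is_ideal X -> X x0 -> h x0 \is a GRing.unit -> Pprop X ->
  is_trace_ideal X.
Proof.
move=> HX Xx0 Ux0 HP.
exists (subX HX : lmodType S) => a; split.
  move=> Xa; exists 1%N, (fun _ (u : subX HX) => proj1_sig u), (fun _ => exist _ a Xa).
  by split; [move=> _ r u v | rewrite big_ord1].
move=> [n [fs [ms [Hf ->]]]].
have key : forall i u, X (fs i u).
  move=> i u; pose m0 : subX HX := exist _ x0 Xx0.
  pose c := (h x0)^-1 * h (fs i m0).
  have Hc : forall v : subX HX, h (fs i v) = c * h (proj1_sig v).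
    move=> v; have E : x0 *: v = proj1_sig v *: m0.
      by apply: subX_eq; rewrite /= mulrC.
    have := congr1 (fun w => h (fs i w)) E; rewrite /= !homZ // !rmorphM => E2.
    by rewrite /c -mulrA [_ * h (proj1_sig v)]mulrC -E2 mulrA mulVr ?mul1r.
  have [x' [Xx' ex']] := HP c (fun x Xx => ex_intro _ (fs i (exist _ x Xx)) (Hc _)) _ (proj2_sig u).
  by rewrite -Hc in ex'; rewrite -(hinj ex').
elim/big_ind: _ => //; first exact: HX.1.
  by move=> ? ?; apply: HX.2.1.
Qed.
End Gen.

Section Main.
Variables (R : comUnitRingType) (Q : comUnitRingType) (f : {rmorphism R -> Q}).
Variables (A : comNzRingType) (g : {rmorphism A -> Q}) (I J : R -> Prop) (q : R).
Hypothesis finj : injective f.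
Hypothesis funit : forall s, nonzerodivisor s -> f s \is a GRing.unit.
Hypothesis ginj : injective g.
Hypothesis HB : set_eq (img g (fun _ => True)) (colon (img f I) (img f I)).
Hypothesis HIid : is_ideal I.
Hypothesis PI : Pprop f I.
Hypothesis i0 : R.
Hypothesis Ii0 : I i0.
Hypothesis nzi0 : nonzerodivisor i0.
Hypothesis HJid : is_ideal J.
Hypothesis j0 : R.
Hypothesis Jj0 : J j0.
Hypothesis nzj0 : nonzerodivisor j0.
Hypothesis JI : included J I.
Hypothesis Iq : I q.
Hypothesis HIJ : set_eq (ideal_mul I J) (scale_set q J).

Lemma IJq i j : I i -> J j -> exists j', J j' /\ i * j = q * j'.
Proof.
move=> Ii Jj; have : ideal_mul I J (i * j).
  by exists 1%N, (fun _ => i), (fun _ => j); split; [|rewrite big_ord1].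
by move/HIJ => [j' [Jj' e]]; exists j'.
Qed.

Lemma nzq : nonzerodivisor q.
Proof.
have [j' [_ e]] := IJq Ii0 Jj0.
move=> y qy; apply: nzj0; apply: nzi0.
by rewrite mulrA e mulrC mulrA (mulrC y) qy mul0r.
Qed.

Let qi := (f q)^-1.
Lemma Uq : f q \is a GRing.unit. Proof. exact: funit nzq. Qed.
Lemma qiq : qi * f q = 1. Proof. exact: mulVr Uq. Qed.
Lemma qqi : f q * qi = 1. Proof. exact: mulrV Uq. Qed.

Lemma inB c : (forall i, I i -> exists i', I i' /\ f i' = c * f i) -> exists a, g a = c.
Proof.
move=> H; have : colon (img f I) (img f I) c.
  move=> y [x [Ix ->]]; have [i' [Ii' e]] := H x Ix; by exists i'.
by move/HB => [a [_ ->]]; exists a.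
Qed.

Lemma Bmul a i : I i -> exists i', I i' /\ f i' = g a * f i.
Proof.
move=> Ii; have : img g (fun _ => True) (g a) by exists a.
move/HB => /(_ (f i)) [|i' [Ii' e]]; first by exists i.
by exists i'.
Qed.

Lemma fB r : exists a, g a = f r.
Proof.
apply: inB => i Ii; exists (r * i); split; first exact: HIid.2.2.
by rewrite rmorphM.
Qed.

Lemma RIB c : (forall i, I i -> exists s, f s = c * f i) -> exists a, g a = c.
Proof. move=> H; apply: inB; exact: PI. Qed.


Lemma dir1 (Z : Q -> Prop) :
  (exists X : A -> Prop, regular_trace_ideal X /\ set_eq (img g X) Z /\
        included Z (colon (img f J) (img f I))) ->
  (exists Y : R -> Prop, regular_trace_ideal Y /\ included Y J /\
        set_eq Z (img (fun y => qi * f y) Y)).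
Proof.
move=> [X [[[HXid [x0 [Xx0 nzx0]]] HXtr] [HgX HZ]]].
have PX := trace_P ginj HXtr.
have Ztoj : forall z, Z z -> exists j, J j /\ f j = z * f q.
  move=> z Zz; have [|j [Jj e]] := HZ z Zz (f q); first by exists q.
  by exists j; rewrite e.
have ZX : forall z, Z z <-> exists x, X x /\ z = g x.
  by move=> z; split => [/HgX|/HgX].
pose Y y := Z (qi * f y).
have qiK : forall z, qi * (z * f q) = z by move=> z; rewrite mulrCA qiq mulr1.
have YJ : forall y, Y y -> J y.
  move=> y /Ztoj [j [Jj e]]; rewrite mulrAC qiq mul1r in e.
  by rewrite -(finj e).
have Y_ideal : is_ideal Y.
  split; first by rewrite /Y rmorph0 mulr0; apply/ZX; exists 0; rewrite rmorph0; split => //; exact: HXid.1.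
  split.
    move=> x y /ZX [a [Xa ea]] /ZX [b [Xb eb]]; apply/ZX; exists (a + b).
    by split; [exact: HXid.2.1|rewrite rmorphD mulrDr ea eb rmorphD].
  move=> r x /ZX [a [Xa ea]]; have [b eb] := fB r.
  apply/ZX; exists (b * a); split; first exact: HXid.2.2.
  by rewrite (rmorphM f) (rmorphM g) mulrCA ea -eb.
have Zgx0 : Z (g x0) by apply/ZX; exists x0.
have [y0 [Jy0 ey0]] := Ztoj _ Zgx0.
have Yy0 : Y y0 by rewrite /Y ey0 qiK.
have nzy0 : nonzerodivisor y0.
  move=> z e; have [b eb] := fB (q * z).
  have : g (x0 * b) = 0.
    by rewrite (rmorphM g) eb (rmorphM f) mulrA -ey0 -rmorphM e rmorph0.
  rewrite -(rmorph0 g) => /ginj /nzx0 b0.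
  have : f (q * z) = f 0 by rewrite -eb b0 !rmorph0.
  by move/finj/nzq.
have Zform : forall z, Z z -> exists y, Y y /\ z = qi * f y.
  move=> z Zz; have [j [Jj e]] := Ztoj _ Zz; exists j.
  by rewrite /Y e qiK.
have IXq : forall i x, I i -> X x -> exists x'', X x'' /\ g x'' = qi * f i * g x.
  move=> i x Ii Xx; apply: (PX (qi * f i)) => // x1 Xx1.
  apply: inB => i2 Ii2.
  have [y1 [Yy1 e1]] : exists y, Y y /\ g x1 = qi * f y by apply: Zform; apply/ZX; exists x1.
  have [j1 [Jj1 ej1]] := IJq Ii (YJ _ Yy1).
  have [j2 [Jj2 ej2]] := IJq Ii2 Jj1.
  exists j2; split; first exact: JI.
  have E : f q * f q * f j2 = f i * f y1 * f i2.
    rewrite -!rmorphM; apply: congr1.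
    have -> : q * q * j2 = q * (i2 * j1) by rewrite ej2 mulrA.
    rewrite (mulrC (i * y1)) ej1; ring.
  have -> : qi * f i * g x1 * f i2 = qi * qi * (f i * f y1 * f i2) by rewrite e1; ring.
  rewrite -E.
  have -> : qi * qi * (f q * f q * f j2) = (qi * f q) * ((qi * f q) * f j2) by ring.
  by rewrite qiq !mul1r.
have PY : Pprop f Y.
  move=> c Hc y Yy.
  have [x [Xx ex]] : exists x, X x /\ qi * f y = g x by apply/ZX.
  have HcX : forall x1, X x1 -> exists s, g s = c * g x1.
    move=> x1 Xx1; apply: RIB => i Ii.
    have [x'' [Xx'' e'']] := IXq i x1 Ii Xx1.
    have Zx'' : Z (g x'') by apply/ZX; exists x''.
    have [y'' [Yy'' e2]] := Zform _ Zx''.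
    have [s es] := Hc y'' Yy''.
    have E : f y'' = f q * (qi * f y'') by rewrite mulrA qqi mul1r.
    have E2 : f y'' = f i * g x1 by rewrite E -e2 e'' mulrA mulrA qqi mul1r.
    by exists s; rewrite es E2; ring.
  have [x' [Xx' ex']] := PX c HcX x Xx.
  have Zgx' : Z (g x') by apply/ZX; exists x'.
  have [j [Jj ej]] := Ztoj _ Zgx'.
  exists j; split; first by rewrite /Y ej qiK.
  rewrite ej ex' -ex.
  have -> : c * (qi * f y) * f q = c * (qi * f q) * f y by ring.
  by rewrite qiq mulr1.
exists Y; split; [split|split].
- split => //; exists y0; split => //.
- exact: (P_trace finj Y_ideal Yy0 (funit nzy0) PY).
- exact: YJ.
- move=> z; split.
    move=> Zz; have [j [Jj e]] := Ztoj _ Zz; exists j; split; last by rewrite e qiK.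
    by rewrite /Y e qiK.
  by move=> [y [Yy ->]].
Qed.


Lemma dir2 (Z : Q -> Prop) :
  (exists Y : R -> Prop, regular_trace_ideal Y /\ included Y J /\
        set_eq Z (img (fun y => qi * f y) Y)) ->
  (exists X : A -> Prop, regular_trace_ideal X /\ set_eq (img g X) Z /\
        included Z (colon (img f J) (img f I))).
Proof.
move=> [Y [[[HYid [y0 [Yy0 nzy0]]] HYtr] [YJ HZ]]].
have PY := trace_P finj HYtr.
have ZY : forall z, Z z <-> exists y, Y y /\ z = qi * f y.
  by move=> z; split => [/HZ|/HZ].
have qiK : forall z, qi * (f q * z) = z by move=> z; rewrite mulrA qiq mul1r.
have Key1 : forall y i, Y y -> I i -> exists j, J j /\ f j = qi * f y * f i.
  move=> y i Yy Ii; have [j [Jj ej]] := IJq Ii (YJ _ Yy).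
  exists j; split => //.
  by rewrite -mulrA -rmorphM (mulrC y i) ej rmorphM qiK.
have ZB : forall z, Z z -> exists a, g a = z.
  move=> z /ZY [y [Yy ->]]; apply: inB => i Ii.
  have [j [Jj ej]] := Key1 y i Yy Ii; exists j; split => //; exact: JI.
pose X a := Z (g a).
have X_ideal : is_ideal X.
  split; first by apply/ZY; exists 0; rewrite !rmorph0 mulr0; split => //; exact: HYid.1.
  split.
    move=> a b /ZY [y1 [Y1 e1]] /ZY [y2 [Y2 e2]]; apply/ZY; exists (y1 + y2).
    by split; [exact: HYid.2.1|rewrite !rmorphD e1 e2 mulrDr].
  move=> r a /ZY [y [Yy ey]].
  have Hc : forall y', Y y' -> exists s, f s = g r * f y'.
    move=> y' Yy'; have [i' [_ e]] := Bmul r (JI (YJ _ Yy')); by exists i'.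
  have [y' [Yy' ey']] := PY _ Hc _ Yy.
  apply/ZY; exists y'; split => //.
  by rewrite rmorphM ey ey' mulrCA.
have Zz0 : Z (qi * f y0) by apply/ZY; exists y0.
have [a0 ea0] := ZB _ Zz0.
have Xa0 : X a0 by rewrite /X ea0.
have Ua0 : g a0 \is a GRing.unit.
  by rewrite ea0 unitrM unitrV Uq funit.
have nza0 : nonzerodivisor a0.
  move=> b e; apply: ginj; rewrite rmorph0.
  have := congr1 g e; rewrite rmorphM rmorph0 => e2.
  by rewrite -[g b]mul1r -(mulVr Ua0) -mulrA e2 mulr0.
have PX : Pprop g X.
  move=> c Hc x Xx.
  have [y [Yy ey]] := (iffLR (ZY _)) Xx.
  have Hc2 : forall y', Y y' -> exists s, f s = c * f y'.
    move=> y' Yy'.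
    have Zy' : Z (qi * f y') by apply/ZY; exists y'.
    have [a' ea'] := ZB _ Zy'.
    have [s es] := Hc a' (ltac:(by rewrite /X ea')).
    have [i' [_ ei']] := Bmul s Iq.
    exists i'; rewrite ei' es ea'.
    have -> : c * (qi * f y') * f q = c * (qi * f q) * f y' by ring.
    by rewrite qiq mulr1.
  have [y'' [Yy'' ey'']] := PY _ Hc2 _ Yy.
  have Zy'' : Z (qi * f y'') by apply/ZY; exists y''.
  have [x' ex'] := ZB _ Zy''.
  exists x'; split; first by rewrite /X ex'.
  by rewrite ex' ey'' ey mulrCA.
exists X; split; [split|split].
- split => //; exists a0; split => //.
- exact: (P_trace ginj X_ideal Xa0 Ua0 PX).
- move=> z; split; first by move=> [a [Xa ->]].
  move=> Zz; have [a ea] := ZB _ Zz; exists a; split => //; by rewrite /X ea.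
- move=> z /ZY [y [Yy ->]] w [i [Ii ->]].
  have [j [Jj ej]] := Key1 y i Yy Ii; by exists j.
Qed.

End Main.

Theorem proposition2p5
  (R : comUnitRingType) (m : R -> Prop)
  (Q : comUnitRingType) (f : {rmorphism R -> Q})
  (A : comNzRingType) (g : {rmorphism A -> Q})
  (I J : R -> Prop) (q : R) :
  cohen_macaulay_local m 1 ->
  total_ring_of_fractions f ->
  (* A with the embedding g is the ring I : I inside Q(R) *)
  injective g ->
  set_eq (img g (fun _ => True)) (colon (img f I) (img f I)) ->
  regular_trace_ideal I ->
  regular_ideal J -> included J I ->
  I q -> set_eq (ideal_mul I J) (scale_set q J) ->
  forall Z : Q -> Prop,
    (exists X : A -> Prop, regular_trace_ideal X /\ set_eq (img g X) Z /\
        included Z (colon (img f J) (img f I)))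
    <->
    (exists Y : R -> Prop, regular_trace_ideal Y /\ included Y J /\
        set_eq Z (img (fun y => (f q)^-1 * f y) Y)).
Proof.
move=> _ [finj [fU _]] ginj HB [[HIid [i0 [Ii0 nzi0]]] HItr] [HJid [j0 [Jj0 nzj0]]] JI Iq HIJ Z.
have PI := trace_P finj HItr.
split.
  have H1 := dir1 finj fU ginj HB HIid PI Ii0 nzi0 Jj0 nzj0 JI Iq HIJ.
  exact: H1.
exact: (dir2 finj fU ginj HB Ii0 nzi0 Jj0 nzj0 JI Iq HIJ).
Qed.
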